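(* Let $H=(V_1,\dots,V_d,E)$ be a finite $d$-partite hypergraph with $E\neq\emptyset$, and let $W_j\subseteq V_j$ for $j=1,\dots,d$. Then for every $i=1,\dots,d$, \[ disc_H(W_1,\dots,W_d)\leq disc_{B_i}\big(W_i,E_i(W_1,\dots,W_d)\big)+\frac{|W_i|}{|V_i|}\,disc_{H_i}(W_1,\dots,W_{i-1},W_{i+1},\dots,W_d). \]
   Context: A $d$-partite hypergraph $H=(V_1,\dots,V_d,E)$ has vertex set $V_1\sqcup\dots\sqcup V_d$ and edges $E\subseteq\prod_{i=1}^dV_i$ (each edge is a $d$-set with exactly one vertex in each $V_i$). For $W_j\subseteq V_j$, $E(W_1,\dots,W_d)=E\cap\prod_j W_j$ and $disc_H(W_1,\dots,W_d)=\left|\frac{|E(W_1,\dots,W_d)|}{|E|}-\prod_{j=1}^d\frac{|W_j|}{|V_j|}\right|$. For each $i$, $E_i=\{e\setminus\{v\}: e\in E,\ v\in e\cap V_i\}$ (walls of cotype $i$), $H_i=(V_1,\dots,V_{i-1},V_{i+1},\dots,V_d,E_i)$ is the induced $(d-1)$-partite hypergraph, $E_i(W_1,\dots,W_d)=E_i\cap\prod_{j\ne i}W_j$, and $disc_{H_i}(W_1,\dots,W_{i-1},W_{i+1},\dots,W_d)=\left|\frac{|E_i(W_1,\dots,W_d)|}{|E_i|}-\prod_{j\ne i}\frac{|W_j|}{|V_j|}\right|$. $B_i$ is the bipartite graph with vertex sides $V_i$ and $E_i$, where $v\in V_i$ and $Y\in E_i$ are adjacent iff $\{v\}\cup Y\in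 E$; its edge set is $E_{B_i}$. For a bipartite graph with sides $V,V'$ and edge set $E'$, and $S\subseteq V$, $T\subseteq V'$, $disc(S,T)=\left|\frac{|E'(S,T)|}{|E'|}-\frac{|S|}{|V|}\frac{|T|}{|V'|}\right|$. *)

(* Defs.v *)
From mathcomp Require Import all_boot all_order all_algebra.
Set Implicit Arguments. Unset Strict Implicit. Unset Printing Implicit Defensive.
Import Order.TTheory GRing.Theory Num.Theory.
Local Open Scope ring_scope.

(* A d-partite hypergraph on a finite vertex type T: [part x] is the index
   of the class V_i containing x, edges are sets of vertices with exactly
   one vertex in each class. *)
Section Hyper.
Variables (T : finType) (d : nat) (part : T -> 'I_d).

Definition Vp (i : 'I_d) : {set T} := [set x | part x == i].

Definition is_edge (e : {set T}) : bool := [forall i, #|e :&: Vp i| == 1%N].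

Variable E : {set {set T}}.
Variable W : 'I_d -> {set T}.

Definition EW : {set {set T}} :=
  [set e in E | [forall j, e :&: Vp j \subset W j]].

Definition walls (i : 'I_d) : {set {set T}} :=
  [set Y | [exists e in E, exists v in e :&: Vp i, Y == e :\ v]].

Definition wallsW (i : 'I_d) : {set {set T}} :=
  [set Y in walls i | [forall j, (j != i) ==> (Y :&: Vp j \subset W j)]].

Definition EB (i : 'I_d) : {set T * {set T}} :=
  [set p | [&& p.1 \in Vp i, p.2 \in walls i & (p.1 |: p.2) \in E]].

Definition fracn (R : numFieldType) (a b : nat) : R := a%:R / b%:R.

Definition disc_H (R : numFieldType) : R :=
  `| fracn R #|EW| #|E| - \prod_(j < d) fracn R #|W j| #|Vp j| |.

Definition disc_Hi (R : numFieldType) (i : 'I_d) : R :=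
  `| fracn R #|wallsW i| #|walls i|
     - \prod_(j < d | j != i) fracn R #|W j| #|Vp j| |.
End Hyper.

Definition disc_bip (R : numFieldType) (X Y : finType)
  (A : {set X}) (B : {set Y}) (F : {set X * Y}) (S : {set X}) (U : {set Y}) : R :=
  `| fracn R #|[set p in F | (p.1 \in S) && (p.2 \in U)]| #|F|
     - fracn R #|S| #|A| * fracn R #|U| #|B| |.

(* Main.v *)
Require Import Defs.
From mathcomp Require Import all_boot all_order all_algebra.
From mathcomp Require Import ring.
Import Order.TTheory GRing.Theory Num.Theory.
Local Open Scope ring_scope.

Theorem lemma3p5 (R : realFieldType) (T : finType) (d : nat)
  (part : T -> 'I_d) (E : {set {set T}}) (W : 'I_d -> {set T}) :
  (forall e, e \in E -> is_edge part e) ->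
  E != set0 ->
  (forall j, W j \subset Vp part j) ->
  forall i : 'I_d,
    disc_H part E W R <=
      disc_bip R (Vp part i) (walls part E i) (EB part E i) (W i) (wallsW part E W i)
      + fracn R #|W i| #|Vp part i| * disc_Hi part E W R i.
Proof.
move=> Hedge _ _ i.
have one : forall e, e \in E -> exists v, e :&: Vp part i = [set v].
  move=> e /Hedge /forallP /(_ i) H1; have [v Hv] := cards1P H1; by exists v.
have wdisj : forall Y, Y \in walls part E i -> Y :&: Vp part i = set0.
  move=> Y; rewrite inE => /existsP [e /andP [eE /existsP [v /andP [ve /eqP ->]]]].
  have [u hu] := one e eE; move: ve; rewrite hu inE => /eqP ->.
  by rewrite setIDAC hu setDv.
pose f (p : T * {set T}) := p.1 |: p.2.
have fI : forall p, p \in EB part E i -> f p :&: Vp part i = [set p.1].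
  move=> p; rewrite inE => /and3P [p1 p2 _].
  rewrite /f setIUl (wdisj p.2 p2) setU0; apply/setP => x; rewrite !inE.
  case: (eqVneq x p.1) => [->|]; last by rewrite /= ?andbF.
  by move: p1; rewrite !inE => ->.
have fD : forall p, p \in EB part E i -> f p :\ p.1 = p.2.
  move=> p pE; rewrite /f setU1K //; apply/negP => h.
  move: pE; rewrite inE => /and3P [p1 p2 _].
  have : p.1 \in p.2 :&: Vp part i by rewrite inE h.
  by rewrite wdisj // inE.
have finj : {in EB part E i &, injective f}.
  move=> p q pE qE fpq.
  have h1 : p.1 = q.1.
    have := fI p pE; rewrite fpq fI // => /setP /(_ p.1); rewrite !inE eqxx.
    by move=> /eqP.
  have h2 : p.2 = q.2 by rewrite -fD // -(fD q) // fpq h1.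
  by case: p q h1 h2 {pE qE fpq} => [? ?] [? ?] /= -> ->.
have fEB : forall p, p \in EB part E i -> f p \in E.
  by move=> p; rewrite inE => /and3P [].
have fsurj : forall e, e \in E -> exists2 p, p \in EB part E i & e = f p.
  move=> e eE; have [v hv] := one e eE.
  have : v \in e :&: Vp part i by rewrite hv inE.
  rewrite inE => /andP [ve vV].
  exists (v, e :\ v); last by rewrite /f /= setD1K.
  rewrite inE /= vV setD1K // eE andbT inE.
  rewrite /=; apply/exists_inP; exists e => //; apply/exists_inP; exists v => //.
  by rewrite hv inE eqxx.
have cardE : #|EB part E i| = #|E|.
  rewrite -(card_in_imset finj); apply: eq_card => e.
  apply/imsetP/idP => [[p pE ->]|eE]; first exact: fEB.
  by have [p pE ->] := fsurj e eE; exists p.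
have equiv : forall p, p \in EB part E i ->
    (f p \in EW part E W) = (p.1 \in W i) && (p.2 \in wallsW part E W i).
  move=> p pE; have pE' := pE; move: pE'; rewrite inE => /and3P [p1 p2 _].
  rewrite [p.2 \in wallsW _ _ _ _]inE p2 [f p \in _]inE fEB // /=.
  have hj : forall j, j != i -> f p :&: Vp part j = p.2 :&: Vp part j.
    move=> j ji; rewrite /f setIUl; apply/setP => x; rewrite !inE.
    case: (eqVneq x p.1) => [->|] //=.
    move: p1; rewrite inE => /eqP ->; by rewrite eq_sym (negbTE ji) /= andbF.
  apply/forallP/andP => [H|[H1 /forallP H2] j].
    split; first by have := H i; rewrite fI // sub1set.
    by apply/forallP => j; apply/implyP => ji; rewrite -hj // H.
  case: (eqVneq j i) => [->|ji]; first by rewrite fI // sub1set.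
  by rewrite hj //; have := H2 j; rewrite ji.
have cardEW : #|[set p in EB part E i | (p.1 \in W i) && (p.2 \in wallsW part E W i)]|
              = #|EW part E W|.
  have sub : {in [set p in EB part E i | (p.1 \in W i) && (p.2 \in wallsW part E W i)] &, injective f}.
    move=> p q pin qin; apply: finj; [move: pin|move: qin];
      by rewrite in_set => /andP [].
  rewrite -(card_in_imset sub); apply: eq_card => e.
  apply/imsetP/idP => [[p]|eW].
    by rewrite in_set => /andP [pE h] ->; rewrite equiv.
  have eE : e \in E by move: eW; rewrite in_set => /andP [].
  have [p pE fe] := fsurj e eE; exists p => //; rewrite in_set pE /= -equiv //.
  by rewrite -fe.
rewrite /disc_H /disc_bip /disc_Hi cardE cardEW.
rewrite (bigD1 i) //=.
set a := fracn R _ _; set b := fracn R #|W i| _; set c := fracn R #|wallsW _ _ _ _| _.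
set P := \prod_(j < d | j != i) _.
have b0 : 0 <= b by rewrite /b /fracn divr_ge0 // ler0n.
have -> : a - b * P = (a - b * c) + b * (c - P) by ring.
rewrite (le_trans (ler_normD _ _)) // normrM (ger0_norm b0) mulrC.
by [].
Qed.
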